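(* Let $\lambda$ be a nonzero real number and $n\ge2$ an integer. Then $$\sum_{k=2}^{n}(1)_{k-1,\frac{1}{\lambda}}\,\lambda^{k-2}\,S_{2,\lambda}(n,k)=(n-1)(1)_{n-1,\lambda}.$$
   Context: For real $y$, $\mu\neq 0$ and integer $k\ge0$: $(y)_{0,\mu}=1$, $(y)_{k,\mu}=y(y-\mu)\cdots(y-(k-1)\mu)$ (used with $\mu=\lambda$ and $\mu=1/\lambda$); $(y)_0=1$, $(y)_k=y(y-1)\cdots(y-k+1)$. The degenerate Stirling numbers of the second kind are defined by $(x)_{n,\lambda}=\sum_{k=0}^{n}S_{2,\lambda}(n,k)(x)_{k}$ ($n\ge0$); equivalently $\frac{1}{k!}(e_\lambda(t)-1)^k=\sum_{n\ge k}S_{2,\lambda}(n,k)\frac{t^n}{n!}$ with $e_\lambda(t)=(1+\lambda t)^{1/\lambda}$. *)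

(* Defs.v *)
From mathcomp Require Import all_boot all_order all_algebra.
Set Implicit Arguments. Unset Strict Implicit. Unset Printing Implicit Defensive.
Import Order.TTheory GRing.Theory Num.Theory.
Local Open Scope ring_scope.

(* generalized falling factorial (y)_{k,mu} = y (y - mu) ... (y - (k-1) mu);
   (y)_{0,mu} = 1, and (y)_k = gfall y 1 k *)
Definition gfall {R : pzRingType} (y mu : R) (k : nat) : R :=
  \prod_(i < k) (y - i%:R * mu).

Definition is_deg_stirling2 {R : pzRingType} (lam : R) (S : nat -> nat -> R) :=
  forall (n : nat) (x : R), gfall x lam n = \sum_(k < n.+1) S n k * gfall x 1 k.

(* Main.v *)
Require Import Defs.
From mathcomp Require Import all_boot all_order all_algebra.
From mathcomp Require Import ring.
Import Order.TTheory GRing.Theory Num.Theory.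
Local Open Scope ring_scope.

Lemma poly_zero_nz (R : numDomainType) (p : {poly R}) :
  (forall x : R, x != 0 -> p.[x] = 0) -> p = 0.
Proof.
move=> H; apply/eqP; apply/negPn/negP => p0.
have := max_poly_roots p0 (rs := [seq (i.+1)%:R | i <- iota 0 (size p)]).
rewrite size_map size_iota ltnn => H'.
suff: false by [].
apply: H'.
  by apply/allP => x /mapP [i _ ->]; apply/rootP; apply: H; rewrite pnatr_eq0.
rewrite map_inj_uniq ?iota_uniq // => i j /eqP; rewrite eqr_nat => /eqP [].
done.
Qed.

Lemma gfall_scale (R : fieldType) (lam : R) m : lam != 0 ->
  lam ^+ m * gfall 1 lam^-1 m = gfall lam 1 m.
Proof.
move=> l0; rewrite /gfall -[in X in X * _](card_ord m) -prodr_const -big_split /=.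
by apply: eq_bigr => i _; field.
Qed.

Lemma gfall0 (R: pzRingType) (mu:R) k : gfall 0 mu k.+1 = 0.
Proof. by rewrite /gfall big_ord_recl /= mulr0n mul0r subr0 mul0r. Qed.

Lemma gfallS (R: pzRingType) (x mu:R) k :
  gfall x mu k.+1 = x * \prod_(i < k) (x - (i.+1)%:R * mu).
Proof. by rewrite /gfall big_ord_recl /= mulr0n mul0r subr0. Qed.

Lemma gfall11 (R: pzRingType) k : gfall (1:R) 1 k.+2 = 0.
Proof. by rewrite /gfall !big_ord_recl /= /bump /= addn0 mulr1n !mulr1 subrr mul0r mulr0. Qed.

Lemma gfall_z (R: pzRingType) (y mu : R) : gfall y mu 0 = 1.
Proof. by rewrite /gfall big_ord0. Qed.

Theorem theorem15 (R : realFieldType) (lam : R) (S : nat -> nat -> R) (n : nat) :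
  lam != 0 -> is_deg_stirling2 lam S -> (2 <= n)%N ->
  \sum_(2 <= k < n.+1) gfall 1 lam^-1 k.-1 * lam ^+ (k - 2) * S n k
  = (n.-1)%:R * gfall 1 lam n.-1.
Proof.
move=> l0 HS; case: n => [|[|m]] // _.
set Q : {poly R} := \prod_(i < m.+1) ('X - ((i.+1)%:R * lam)%:P)
   - \sum_(k < m.+2) S m.+2 k.+1 *: \prod_(i < k) ('X - (i.+1)%:R%:P).
have S0 : S m.+2 0%N = 0.
  have := HS m.+2 0; rewrite gfall0 big_ord_recl big1 ?addr0.
    by rewrite /gfall big_ord0 mulr1 => <-.
  by move=> i _; rewrite /bump /= gfall0 mulr0.
have HQ : forall x, x * Q.[x] = 0.
  move=> x; have := HS m.+2 x.
  rewrite gfallS => H; rewrite [RHS]big_ord_recl S0 mul0r add0r in H.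
  rewrite /Q hornerD hornerN horner_sum horner_prod (eq_bigr (fun i : 'I_m.+1 => x - i.+1%:R * lam)); last by move=> i _; rewrite !hornerE.
  rewrite mulrDr mulrN mulr_sumr H.
  apply/eqP; rewrite subr_eq0; apply/eqP; apply: eq_bigr => k _.
  rewrite /bump /= gfallS hornerZ horner_prod.
  rewrite mulrCA; congr (_ * (_ * _)); apply: eq_bigr => i _.
  by rewrite !hornerE.
have Q0 : Q = 0.
  apply: poly_zero_nz => x x0; have := HQ x.
  by move/eqP; rewrite mulf_eq0 (negPf x0) /= => /eqP.
have := congr1 (horner^~ (lam + 1)) Q0.
rewrite /Q horner0 hornerD hornerN horner_sum horner_prod => /eqP; rewrite subr_eq0 => /eqP.
rewrite (eq_bigr (fun i : 'I_m.+1 => 1 - i%:R * lam)); last first.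
  by move=> i _; rewrite !hornerE -addn1 natrD; ring.
rewrite (eq_bigr (fun k : 'I_m.+2 => S m.+2 k.+1 * gfall lam 1 k)); last first.
  move=> k _; rewrite hornerZ horner_prod /gfall; congr (_ * _).
  by apply: eq_bigr => i _; rewrite !hornerE -addn1 natrD; ring.
rewrite -/(gfall 1 lam m.+1) big_ord_recl /= gfall_z mulr1 => E.
have S1 : S m.+2 1%N = gfall 1 lam m.+2.
  have := HS m.+2 1; rewrite big_ord_recl S0 mul0r add0r big_ord_recl big1.
    by rewrite /gfall /= big_ord1 /= mulr0n mul0r subr0 mulr1 addr0.
  by move=> i _; rewrite /bump /= gfall11 mulr0.
have GS : gfall 1 lam m.+2 = gfall 1 lam m.+1 * (1 - m.+1%:R * lam).
  by rewrite /gfall big_ord_recr.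
apply: (mulfI l0).
rewrite mulr_sumr (big_addn 0 m.+3 2) subSS subSS subn0 big_mkord.
rewrite (eq_bigr (fun k : 'I_m.+1 => S m.+2 (bump 0 k).+1 * gfall lam 1 (bump 0 k))); last first.
  move=> k _; rewrite /bump /= addn2 /= subn2 /= -(@gfall_scale _ _ k.+1 l0) exprS add1n; ring.
rewrite (_ : \sum_(i < m.+1) _ = gfall 1 lam m.+1 - S m.+2 1%N); last first.
  by rewrite E; ring.
rewrite S1 GS; ring.
Qed.
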